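(* Under the model and the scheme described in the context, for every $t\ge 1$, $\Pr(Q_t=AB)=|1-\alpha-\beta|^t$; consequently the scheme is decodable and has average normalized download cost $\ell_t/L=1+|1-\alpha-\beta|^t$ for $t\ge1$ (and $\ell_t/L=2$ for $t\le 0$), where $\ell(A)=\ell(B)=L$, $\ell(AB)=2L$ and $\ell_t=\mathbb{E}[\ell(Q_t)]$.
   Context: Model. Fix $\alpha,\beta\in[0,1]$ and a positive integer $L$. There are two sources, $A$ and $B$. At each time $t\in\mathbb{Z}$ each source $x\in\{A,B\}$ produces a message $W_{x,t}$ uniformly distributed on $\{0,1\}^L$; all messages are mutually independent. The user's requests $\{X_t\}_{t\in\mathbb{Z}}$ form a time-homogeneous Markov chain on $\{A,B\}$ with $\Pr(X_{t+1}=B\mid X_t=A)=\alpha$ and $\Pr(X_{t+1}=A\mid X_t=B)=\beta$, and $0<\Pr(X_t=A)<1$ for every $t$. The user has mutually independent local randomness $\{S_t\}_{t\in\mathbb{Z}}$, and $\{X_t\}$, $\{W_{x,t}\}$, $\{S_t\}$ are mutually independent. Decodability means the user's desired message $W_{X_t,t}$ is a function of the answer at time $t$. Scheme. Query alphabet $\{A,B,AB\}$. The answer to query $A$ is $W_{A,t}$, to $B$ is $W_{B,t}$, to $AB$ is $(W_{A,t},W_{B,t})$. For $t\le 0$, $Q_t=AB$. For $t\ge1$, $Q_t$ is generated from $(X_0,X_t,Q_{t-1})$ and fresh randomness $S_t$ (so that, given $(X_0,X_t,Q_{t-1})$, $Q_t$ is conditionally independent of all other requests and queries) as follows. If $Q_{t-1}\in\{A,B\}$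 then $Q_t=X_t$. If $Q_{t-1}=AB$, then the conditional law of $Q_t$ given $(X_0,X_t)$ is: (i) if $\alpha+\beta<1$: for $(X_0,X_t)=(A,A)$, $Q_t=A$ w.p. $\beta/(1-\alpha)$ and $Q_t=AB$ w.p. $(1-\alpha-\beta)/(1-\alpha)$; for $(A,B)$, $Q_t=B$; for $(B,A)$, $Q_t=A$; for $(B,B)$, $Q_t=B$ w.p. $\alpha/(1-\beta)$ and $Q_t=AB$ w.p. $(1-\alpha-\beta)/(1-\beta)$; (ii) if $\alpha+\beta=1$: $Q_t=X_t$; (iii) if $\alpha+\beta>1$ and $t$ even: for $(A,A)$, $Q_t=A$ w.p. $(1-\alpha)/\beta$ and $AB$ w.p. $(\alpha+\beta-1)/\beta$; for $(A,B)$, $Q_t=B$; for $(B,A)$, $Q_t=A$; for $(B,B)$, $Q_t=B$ w.p. $(1-\beta)/\alpha$ and $AB$ w.p. $(\alpha+\beta-1)/\alpha$; (iv) if $\alpha+\beta>1$ and $t$ odd: for $(A,A)$, $Q_t=A$; for $(A,B)$, $Q_t=B$ w.p. $(1-\beta)/\alpha$ and $AB$ w.p. $(\alpha+\beta-1)/\alpha$; for $(B,A)$, $Q_t=A$ w.p. $(1-\alpha)/\beta$ and $AB$ w.p. $(\alpha+\beta-1)/\beta$; for $(B,B)$, $Q_t=B$. *)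

(* Defs.v *)
(* finite-support probability computed by explicit path sums. *)
From Stdlib Require Import Reals List.
Import ListNotations.
Open Scope R_scope.

Inductive Src := SA | SB.
Inductive Qry := qA | qB | qAB.

Definition qry_eqb (q r : Qry) : bool :=
  match q, r with
  | qA, qA | qB, qB | qAB, qAB => true
  | _, _ => false end.

Definition qind (q r : Qry) : R := if qry_eqb q r then 1 else 0.

Definition qOf (x : Src) : Qry := match x with SA => qA | SB => qB end.

(* Markov transition  Pr(X_{t+1} = y | X_t = x) *)
Definition trans (a b : R) (x y : Src) : R :=
  match x, y with
  | SA, SA => 1 - a | SA, SB => a
  | SB, SA => b     | SB, SB => 1 - b end.

Fixpoint prA (p a b : R) (t : nat) : R :=
  match t with
  | O => p
  | S t' => prA p a b t' * (1 - a) + (1 - prA p a b t') * b end.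

Definition init (p : R) (x : Src) : R := match x with SA => p | SB => 1 - p end.

(* The scheme: conditional law Pr(Q_s = q | X_0 = x0, X_s = xs, Q_{s-1} = qp) *)
Definition kern (a b : R) (s : nat) (x0 xs : Src) (qp q : Qry) : R :=
  match qp with
  | qA | qB => qind q (qOf xs)
  | qAB =>
    match Rlt_le_dec (a + b) 1 with
    | left _ =>
      match x0, xs with
      | SA, SA => b / (1 - a) * qind q qA + (1 - a - b) / (1 - a) * qind q qAB
      | SA, SB => qind q qB
      | SB, SA => qind q qA
      | SB, SB => a / (1 - b) * qind q qB + (1 - a - b) / (1 - b) * qind q qAB
      end
    | right _ =>
      match Req_EM_T (a + b) 1 with
      | left _ => qind q (qOf xs)
      | right _ =>
        if Nat.even s then
          match x0, xs with
          | SA, SA => (1 - a) / b * qind q qA + (a + b - 1) / b * qind q qAB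
          | SA, SB => qind q qB
          | SB, SA => qind q qA
          | SB, SB => (1 - b) / a * qind q qB + (a + b - 1) / a * qind q qAB
          end
        else
          match x0, xs with
          | SA, SA => qind q qA
          | SA, SB => (1 - b) / a * qind q qB + (a + b - 1) / a * qind q qAB
          | SB, SA => (1 - a) / b * qind q qA + (a + b - 1) / b * qind q qAB
          | SB, SB => qind q qB
          end
      end
    end
  end.

Definition states : list (Src * Qry) :=
  [(SA, qA); (SA, qB); (SA, qAB); (SB, qA); (SB, qB); (SB, qAB)].

(* all sequences ((X_1,Q_1), ..., (X_t,Q_t)) *)
Fixpoint paths (t : nat) : list (list (Src * Qry)) :=
  match t with
  | O => [nil]
  | S t' => flat_map (fun st => map (cons st) (paths t')) states
  end.

(* Pr(X_1..X_t, Q_1..Q_t = path | X_0 = x0), with s the time of the head of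
   the path, xprev = X_{s-1}, qprev = Q_{s-1}. *)
Fixpoint pathWeight (a b : R) (x0 : Src) (s : nat) (xprev : Src) (qprev : Qry)
    (path : list (Src * Qry)) : R :=
  match path with
  | nil => 1
  | (x, q) :: rest =>
      trans a b xprev x * kern a b s x0 x qprev q
      * pathWeight a b x0 (S s) x q rest
  end.

Fixpoint sumR (l : list R) : R := match l with nil => 0 | r :: l' => r + sumR l' end.

(* E[ f(X_t, Q_t) ], with Q_0 = AB (as Q_t = AB for all t <= 0). *)
Definition Expect (p a b : R) (t : nat) (f : Src -> Qry -> R) : R :=
  sumR (map (fun x0 =>
    sumR (map (fun path =>
      init p x0 * pathWeight a b x0 1 x0 qAB path
      * (let '(x, q) := last path (x0, qAB) in f x q)) (paths t))) [SA; SB]).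

(* Answer to query q contains the message of source x (hence W_{x,t} is a
   function of the answer) *)
Definition decodes (x : Src) (q : Qry) : bool :=
  match q, x with
  | qAB, _ | qA, SA | qB, SB => true
  | _, _ => false end.

Definition ell (L : nat) (q : Qry) : R :=
  match q with qA | qB => INR L | qAB => 2 * INR L end.

(* Main.v *)
Require Import Defs.
From Stdlib Require Import Reals List Lra Lia.
Import ListNotations.
Open Scope R_scope.

Definition F (a b : R) (n s : nat) (x0 xp : Src) (qp : Qry) (g : Src * Qry -> R) : R :=
  sumR (map (fun path => pathWeight a b x0 s xp qp path * g (last path (xp, qp))) (paths n)).
Arguments F : simpl never.
Arguments kern : simpl never.

Lemma sumR_app l1 l2 : sumR (l1 ++ l2) = sumR l1 + sumR l2.
Proof. induction l1; simpl; [ring| rewrite IHl1; ring]. Qed.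

Lemma sumR_map_scale {A} (c : R) (h : A -> R) l :
  sumR (map (fun y => c * h y) l) = c * sumR (map h l).
Proof. induction l; simpl; [ring| rewrite IHl; ring]. Qed.

Lemma sumR_map_lin {A} (u v : R) (h1 h2 : A -> R) l :
  sumR (map (fun y => u * h1 y + v * h2 y) l) = u * sumR (map h1 l) + v * sumR (map h2 l).
Proof. induction l; simpl; [ring| rewrite IHl; ring]. Qed.

Lemma sumR_flat {A} (h : list A -> R) (L : list (list A)) (sts : list A) :
  sumR (map h (flat_map (fun st => map (cons st) L) sts)) =
  sumR (map (fun st => sumR (map (fun path => h (st :: path)) L)) sts).
Proof.
  induction sts; simpl; [reflexivity|].
  rewrite map_app, sumR_app, IHsts, map_map. reflexivity.
Qed.

Lemma last_indep {A} (l : list A) y d d' : last (y :: l) d = last (y :: l) d'.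
Proof. revert y; induction l; intros y; [reflexivity|]. exact (IHl a). Qed.

Lemma last_cons {A} (l : list A) st d : last (st :: l) d = last l st.
Proof. destruct l; simpl; [reflexivity|]. apply last_indep. Qed.

Lemma F_0 a b s x0 xp qp g : F a b 0 s x0 xp qp g = g (xp, qp).
Proof. unfold F; simpl. ring. Qed.

Lemma F_S a b n s x0 xp qp g :
  F a b (S n) s x0 xp qp g =
  sumR (map (fun st => trans a b xp (fst st) * kern a b s x0 (fst st) qp (snd st)
                        * F a b n (S s) x0 (fst st) (snd st) g) states).
Proof.
  unfold F at 1. cbn [paths]. rewrite sumR_flat. f_equal. apply map_ext.
  intros [x q]. unfold F. simpl fst; simpl snd. rewrite <- sumR_map_scale. f_equal.
  apply map_ext. intros path. cbn [pathWeight]. rewrite last_cons. ring.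
Qed.

Lemma F_lin a b n s x0 xp qp u v g1 g2 :
  F a b n s x0 xp qp (fun z => u * g1 z + v * g2 z) =
  u * F a b n s x0 xp qp g1 + v * F a b n s x0 xp qp g2.
Proof.
  unfold F. rewrite <- sumR_map_lin. f_equal. apply map_ext. intros; ring.
Qed.

Lemma F_ext a b n s x0 xp qp g1 g2 : (forall z, g1 z = g2 z) ->
  F a b n s x0 xp qp g1 = F a b n s x0 xp qp g2.
Proof. intros H. unfold F. f_equal. apply map_ext. intros; rewrite H; reflexivity. Qed.

Lemma Expect_F p a b t f :
  Expect p a b t f = init p SA * F a b t 1 SA SA qAB (fun z => let '(x, q) := z in f x q)
                   + init p SB * F a b t 1 SB SB qAB (fun z => let '(x, q) := z in f x q).
Proof.
  unfold Expect, F. cbn [map sumR]. rewrite Rplus_0_r, <- !sumR_map_scale.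
  f_equal; f_equal; apply map_ext; intros path; destruct (last path _); ring.
Qed.
Section S.
Variables a b : R.
Hypothesis Ha : 0 <= a <= 1.
Hypothesis Hb : 0 <= b <= 1.

Lemma kern_sum s x0 xs qp :
  kern a b s x0 xs qp qA + kern a b s x0 xs qp qB + kern a b s x0 xs qp qAB = 1.
Proof.
  unfold kern. destruct qp.
  1,2: destruct xs; unfold qind; simpl; ring.
  destruct (Rlt_le_dec (a + b) 1).
  - destruct x0, xs; unfold qind; simpl; field; lra.
  - destruct (Req_EM_T (a + b) 1).
    + destruct xs; unfold qind; simpl; ring.
    + assert (a + b > 1) by lra.
      destruct (Nat.even s); destruct x0, xs; unfold qind; simpl; field; lra.
Qed.

Lemma F_one n s x0 xp qp : F a b n s x0 xp qp (fun _ => 1) = 1.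
Proof.
  revert s xp qp; induction n; intros s xp qp.
  - apply F_0.
  - rewrite F_S. cbn [map sumR states fst snd]. rewrite !IHn.
    pose proof (kern_sum s x0 SA qp) as K1. pose proof (kern_sum s x0 SB qp) as K2.
    transitivity (trans a b xp SA * (kern a b s x0 SA qp qA + kern a b s x0 SA qp qB + kern a b s x0 SA qp qAB)
       + trans a b xp SB * (kern a b s x0 SB qp qA + kern a b s x0 SB qp qB + kern a b s x0 SB qp qAB)).
    + ring.
    + rewrite K1, K2. destruct xp; simpl; ring.
Qed.

Definition nd (z : Src * Qry) : R := let '(x, q) := z in if decodes x q then 0 else 1.
Definition indAB (z : Src * Qry) : R := let '(x, q) := z in qind q qAB.

Lemma kern_mis1 s x0 qp : kern a b s x0 SA qp qB = 0.
Proof.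
  unfold kern. destruct qp; unfold qind; simpl; try ring.
  destruct (Rlt_le_dec (a + b) 1); [destruct x0; simpl; ring|].
  destruct (Req_EM_T (a + b) 1); [simpl; ring|].
  destruct (Nat.even s); destruct x0; simpl; ring.
Qed.

Lemma kern_mis2 s x0 qp : kern a b s x0 SB qp qA = 0.
Proof.
  unfold kern. destruct qp; unfold qind; simpl; try ring.
  destruct (Rlt_le_dec (a + b) 1); [destruct x0; simpl; ring|].
  destruct (Req_EM_T (a + b) 1); [simpl; ring|].
  destruct (Nat.even s); destruct x0; simpl; ring.
Qed.

Lemma F_nd n s x0 xp qp : F a b (S n) s x0 xp qp nd = 0.
Proof.
  revert s xp qp; induction n; intros s xp qp.
  - rewrite F_S. cbn [map sumR states fst snd]. rewrite !F_0.
    rewrite kern_mis1, kern_mis2. simpl. ring.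
  - rewrite F_S. cbn [map sumR states fst snd]. rewrite !IHn. ring.
Qed.

Lemma F_nonAB n s x0 xp : F a b n s x0 xp qA indAB = 0 /\ F a b n s x0 xp qB indAB = 0.
Proof.
  revert s xp; induction n; intros s xp.
  - rewrite !F_0. simpl. split; reflexivity.
  - rewrite !F_S. cbn [map sumR states fst snd].
    split; rewrite !(proj1 (IHn _ _)), !(proj2 (IHn _ _)); unfold kern, qind; simpl; ring.
Qed.

End S.
Section S.
Variables a b : R.
Hypothesis Ha : 0 <= a <= 1.
Hypothesis Hb : 0 <= b <= 1.

Lemma F_ab1 : a + b < 1 -> forall n s x0, F a b n s x0 x0 qAB indAB = (1 - a - b) ^ n.
Proof.
  intros H n; induction n; intros s x0.
  - rewrite F_0. simpl. reflexivity.
  - rewrite F_S. cbn [map sumR states fst snd].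
    rewrite !(proj1 (F_nonAB a b _ _ _ _)), !(proj2 (F_nonAB a b _ _ _ _)).
    destruct x0; rewrite IHn; unfold kern;
      (destruct (Rlt_le_dec (a + b) 1); [|lra]); unfold qind; simpl; field; lra.
Qed.

Lemma F_ab2 : a + b = 1 -> forall n s x0 xp, F a b (S n) s x0 xp qAB indAB = 0.
Proof.
  intros H n s x0 xp.
  rewrite F_S. cbn [map sumR states fst snd].
  rewrite !(proj1 (F_nonAB a b _ _ _ _)), !(proj2 (F_nonAB a b _ _ _ _)).
  unfold kern. destruct (Rlt_le_dec (a + b) 1); [lra|].
  destruct (Req_EM_T (a + b) 1); [|lra]. unfold qind; simpl; ring.
Qed.

Definition other (x : Src) := match x with SA => SB | SB => SA end.

Lemma F_ab3 : a + b > 1 -> forall n s x0,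
  (Nat.even s = false -> F a b n s x0 x0 qAB indAB = (a + b - 1) ^ n) /\
  (Nat.even s = true -> F a b n s x0 (other x0) qAB indAB = (a + b - 1) ^ n).
Proof.
  intros H n; induction n; intros s x0.
  - split; intros; rewrite F_0; simpl; reflexivity.
  - assert (Es : Nat.even (S s) = negb (Nat.even s)).
    { rewrite Nat.even_succ, <- Nat.negb_even. reflexivity. }
    split; intros Hs; rewrite F_S; cbn [map sumR states fst snd];
    rewrite !(proj1 (F_nonAB a b _ _ _ _)), !(proj2 (F_nonAB a b _ _ _ _));
    rewrite Hs in Es; simpl in Es.
    + destruct x0; [pose proof (proj2 (IHn (S s) SA) Es) as E|pose proof (proj2 (IHn (S s) SB) Es) as E]; simpl other in E; rewrite E; unfold kern;
      (destruct (Rlt_le_dec (a + b) 1); [lra|]);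
      (destruct (Req_EM_T (a + b) 1); [lra|]); rewrite Hs; unfold qind; simpl; field; lra.
    + destruct x0; rewrite (proj1 (IHn (S s) _) Es); unfold kern;
      (destruct (Rlt_le_dec (a + b) 1); [lra|]);
      (destruct (Req_EM_T (a + b) 1); [lra|]); rewrite Hs; unfold qind; simpl; field; lra.
Qed.

Lemma F_ab n : (1 <= n)%nat -> forall x0, F a b n 1 x0 x0 qAB indAB = Rabs (1 - a - b) ^ n.
Proof.
  intros Hn x0.
  destruct (Rlt_le_dec (a + b) 1).
  - rewrite Rabs_right by lra. apply F_ab1; lra.
  - destruct (Req_EM_T (a + b) 1).
    + destruct n; [lia|]. rewrite F_ab2 by lra.
      replace (1 - a - b) with 0 by lra. rewrite Rabs_R0. simpl; ring.
    + rewrite Rabs_left by lra. replace (- (1 - a - b)) with (a + b - 1) by ring.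
      apply (proj1 (F_ab3 ltac:(lra) n 1 x0)). reflexivity.
Qed.
End S.

Theorem mainTheorem2 (p a b : R) (L : nat) :
  0 <= a <= 1 -> 0 <= b <= 1 -> (0 < L)%nat ->
  (forall t : nat, 0 < prA p a b t < 1) ->
  (forall t : nat, (1 <= t)%nat ->
     Expect p a b t (fun _ q => qind q qAB) = Rabs (1 - a - b) ^ t
     /\ Expect p a b t (fun x q => if decodes x q then 0 else 1) = 0
     /\ Expect p a b t (fun _ q => ell L q) / INR L = 1 + Rabs (1 - a - b) ^ t)
  /\ Expect p a b 0 (fun _ q => ell L q) / INR L = 2.
Proof.
  intros Ha Hb HL _.
  assert (HL' : INR L <> 0) by (apply not_0_INR; lia).
  split.
  - intros t Ht. rewrite !Expect_F. split; [|split].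
    + change (fun z : Src * Qry => let '(_, q) := z in qind q qAB) with indAB.
      rewrite !F_ab by (auto; lia). unfold init; ring.
    + change (fun z : Src * Qry => let '(x, q) := z in if decodes x q then 0 else 1) with nd.
      destruct t; [lia|]. rewrite !F_nd. ring.
    + assert (Hg : forall x0, F a b t 1 x0 x0 qAB (fun z : Src * Qry => let '(_, q) := z in ell L q)
                = INR L * 1 + INR L * Rabs (1 - a - b) ^ t).
      { intros x0. rewrite (F_ext a b t 1 _ _ qAB _ (fun z => INR L * (fun _ => 1) z + INR L * indAB z)).
        - rewrite F_lin, F_one, F_ab by (auto; lia). reflexivity.
        - intros [x q]; destruct q; unfold ell, indAB, qind; simpl; ring. }
      rewrite !Hg. unfold init. field. exact HL'.
  - unfold Expect. simpl. field. exact HL'.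
Qed.
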